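(* Let $n,s,t$ be nonnegative integers with $n\ge 2$, and let $U=\{1,\dots,n\}$. Let $R$ be a relation between subsets of $U$ and bit strings of length $n+s$ (the representations of a systematic data structure) such that every $S\subseteq U$ has at least one representation $B$ with $(S,B)\in R$, and whenever $(S,B)\in R$ with $B=(B_1,\dots,B_{n+s})$, we have $B_\ell=1\iff\ell\in S$ for $\ell=1,\dots,n$. Assume that for each $r\in\{1,\dots,n\}$ there is an adaptive bit-probe algorithm (a deterministic decision tree that queries individual bits of its input) which, for every $S\subseteq U$ with $|S|=r$ and every $B$ with $(S,B)\in R$, probes at most $rt$ bits of $B$ and outputs $S$ (i.e., distinguishes among the $\binom{n}{r}$ subsets of size $r$). Then $$\Big(s+\frac{1}{\ln 2}\Big)t\ \ge\ \frac{n}{e\ln 2},$$ and, if $s>0$, $st\ge n/2$. *)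

(* Defs.v *)
From Stdlib Require Import Reals List Arith.
Import ListNotations.

(* Subsets of U = {1,...,n} are characteristic vectors: lists of booleans of
   length n, entry at index l-1 (0-based) telling whether l is in S.
   Bit strings B_1..B_{n+s} are lists of booleans of length n+s, 0-indexed. *)

Definition card_bits (S : list bool) : nat := length (filter (fun b => b) S).

(* deterministic adaptive bit-probe algorithm = binary decision tree;
   Node i t0 t1 probes bit i (0-based) and continues with t0 if it is 0,
   with t1 if it is 1. *)
Inductive dtree (A : Type) : Type :=
| Leaf : A -> dtree A
| Node : nat -> dtree A -> dtree A -> dtree A.
Arguments Leaf {A} _.
Arguments Node {A} _ _ _.

Fixpoint dt_output {A : Type} (T : dtree A) (B : list bool) : A :=
  match T with
  | Leaf a => a
  | Node i t0 t1 => if nth i B false then dt_output t1 B else dt_output t0 B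
  end.

Fixpoint dt_probes {A : Type} (T : dtree A) (B : list bool) : nat :=
  match T with
  | Leaf _ => 0
  | Node i t0 t1 => S (if nth i B false then dt_probes t1 B else dt_probes t0 B)
  end.

(* Main.v *)
Require Import Defs.
From Stdlib Require Import Reals List Arith Lia Lra ZArith.
Import ListNotations.


Fixpoint binom (n k : nat) : nat :=
  match n, k with
  | _, 0 => 1
  | 0, S _ => 0
  | S n', S k' => binom n' k' + binom n' (S k')
  end.

Lemma binom_0 n : binom n 0 = 1.
Proof. destruct n; reflexivity. Qed.

Lemma binom_SS n k : binom (S n) (S k) = binom n k + binom n (S k).
Proof. reflexivity. Qed.

Lemma binom_gt n k : n < k -> binom n k = 0.
Proof.
  revert k; induction n; intros k H; destruct k; simpl; try lia; auto.
  rewrite IHn by lia. rewrite IHn by lia. reflexivity.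
Qed.

Lemma binom_pos n k : k <= n -> 1 <= binom n k.
Proof.
  revert k; induction n; intros k H; destruct k; simpl; try lia.
  specialize (IHn k ltac:(lia)). lia.
Qed.

Lemma binom_monoS n k : binom n k <= binom (S n) k.
Proof. destruct k. rewrite !binom_0; lia. rewrite binom_SS. lia. Qed.

Lemma binom_mono m n k : m <= n -> binom m k <= binom n k.
Proof.
  induction 1. lia. eapply Nat.le_trans. apply IHle. apply binom_monoS.
Qed.

Lemma binom_absorb n k : binom n (S k) * S k = binom n k * (n - k).
Proof.
  revert k; induction n; intros k.
  - simpl. destruct k; simpl; lia.
  - destruct k.
    + rewrite binom_SS, !binom_0. 
      assert (binom n 1 = n).
      { clear IHn. induction n. reflexivity. rewrite binom_SS, binom_0, IHn. lia. }
      lia.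
    + rewrite binom_SS. rewrite binom_SS.
      pose proof (IHn (S k)) as H1. pose proof (IHn k) as H2.
      destruct (le_lt_dec (S k) n).
      * replace (S n - S k) with (n - k) by lia.
        replace (n - S k) with (n - k - 1) in H1 by lia.
        nia.
      * rewrite (binom_gt n (S k)) by lia. rewrite (binom_gt n (S (S k))) by lia.
        replace (S n - S k) with 0 by lia. lia.
Qed.

Lemma binom_ratio m n r : m <= n -> m ^ r * binom n r >= n ^ r * binom m r.
Proof.
  intros Hmn. induction r.
  - simpl. rewrite !binom_0. lia.
  - destruct (le_lt_dec r m).
    + assert (Hm : m * (n - r) >= n * (m - r)) by nia.
      pose proof (binom_absorb n r). pose proof (binom_absorb m r).
      assert (m ^ S r * binom n (S r) * S r >= n ^ S r * binom m (S r) * S r).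
      { rewrite <- !Nat.mul_assoc, H, H0. simpl.
        replace (m * m ^ r * (binom n r * (n - r))) with ((m ^ r * binom n r) * (m * (n - r))) by ring.
        replace (n * n ^ r * (binom m r * (m - r))) with ((n ^ r * binom m r) * (n * (m - r))) by ring.
        apply Nat.mul_le_mono; lia. }
      nia.
    + rewrite (binom_gt m (S r)) by lia. lia.
Qed.

Fixpoint subs (n k : nat) : list (list bool) :=
  match n with
  | 0 => match k with 0 => [[]] | S _ => [] end
  | S n' => map (cons false) (subs n' k) ++
            match k with 0 => [] | S k' => map (cons true) (subs n' k') end
  end.

Lemma subs_len n k : length (subs n k) = binom n k.
Proof.
  revert k; induction n; intros k; destruct k; simpl; auto.
  - rewrite app_nil_r, length_map, IHn, binom_0. reflexivity.
  - rewrite length_app, !length_map, !IHn. lia.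
Qed.

Lemma subs_prop n k S : In S (subs n k) -> length S = n /\ card_bits S = k.
Proof.
  revert k S; induction n; intros k S H; destruct k; simpl in H.
  - destruct H as [<-|[]]. split; reflexivity.
  - destruct H.
  - rewrite app_nil_r in H. apply in_map_iff in H as [S' [<- H]].
    apply IHn in H. unfold card_bits in *; simpl; lia.
  - apply in_app_or in H as [H|H]; apply in_map_iff in H as [S' [<- H]];
      apply IHn in H; unfold card_bits in *; simpl; lia.
Qed.

Lemma NoDup_map_cons b (l : list (list bool)) : NoDup l -> NoDup (map (cons b) l).
Proof. intros; apply NoDup_map_NoDup_ForallPairs; auto. intros x y _ _ E; inversion E; auto. Qed.

Lemma subs_nodup n k : NoDup (subs n k).
Proof.
  revert k; induction n; intros k; destruct k; simpl.
  - constructor. intros []. constructor.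
  - constructor.
  - rewrite app_nil_r. apply NoDup_map_cons; auto.
  - apply NoDup_app; try apply NoDup_map_cons; auto.
    intros a H1 H2. apply in_map_iff in H1 as [? [<- _]].
    apply in_map_iff in H2 as [? [H _]]. discriminate.
Qed.
Open Scope bool_scope.

Definition Bd (d k s : nat) : nat :=
  if d <=? s then 2 ^ d else 2 ^ s * binom (d - s + k) k.

Lemma pow2_pos m : 1 <= 2 ^ m.
Proof. induction m; simpl; lia. Qed.

Lemma Bd_ge1 d k s : 1 <= Bd d k s.
Proof.
  unfold Bd. destruct (d <=? s). apply pow2_pos.
  pose proof (pow2_pos s). pose proof (binom_pos (d - s + k) k ltac:(lia)). nia.
Qed.

Lemma Bd_mono d k s : Bd d k s <= Bd (S d) k s.
Proof.
  unfold Bd. destruct (d <=? s) eqn:E1; destruct (S d <=? s) eqn:E2;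
    apply Nat.leb_le in E1 || apply Nat.leb_gt in E1;
    apply Nat.leb_le in E2 || apply Nat.leb_gt in E2; try lia.
  - simpl; lia.
  - assert (d = s) by lia. subst. pose proof (binom_pos (S s - s + k) k ltac:(lia)). nia.
  - apply Nat.mul_le_mono_l. apply binom_mono. lia.
Qed.

Lemma Bd_pref d k s : Bd d (S k) s + Bd d k s <= Bd (S d) (S k) s.
Proof.
  unfold Bd. destruct (d <=? s) eqn:E1; destruct (S d <=? s) eqn:E2;
    apply Nat.leb_le in E1 || apply Nat.leb_gt in E1;
    apply Nat.leb_le in E2 || apply Nat.leb_gt in E2; try lia.
  - simpl; lia.
  - assert (d = s) by lia. subst.
    replace (S s - s + S k) with (S (S k)) by lia.
    rewrite binom_SS. pose proof (binom_pos (S k) k ltac:(lia)).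
    pose proof (binom_pos (S k) (S k) ltac:(lia)). nia.
  - replace (S d - s + S k) with (S (d - s + S k)) by lia.
    rewrite binom_SS. pose proof (binom_mono (d - s + k) (d - s + S k) k ltac:(lia)).
    nia.
Qed.

Lemma Bd_suf d k s : 2 * Bd d k s <= Bd (S d) k (S s).
Proof.
  unfold Bd. simpl (S d <=? S s). destruct (d <=? s).
  - simpl; lia.
  - replace (S d - S s) with (d - s) by lia. simpl. lia.
Qed.

Definition memb (p : nat) (K : list nat) : bool := existsb (Nat.eqb p) K.

Arguments memb : simpl never.

Lemma memb_cons q p K : memb q (p :: K) = orb (q =? p) (memb q K).
Proof. reflexivity. Qed.

Lemma memb_In p K : memb p K = true -> In p K.
Proof.
  unfold memb. intros H. apply existsb_exists in H as [x [Hx E]].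
  apply Nat.eqb_eq in E. subst. auto.
Qed.

Definition cnt (f : nat -> bool) (K : list nat) (l : list nat) : nat :=
  length (filter (fun q => f q && negb (memb q K)) l).

Lemma cnt_mono f p K l : cnt f (p :: K) l <= cnt f K l.
Proof.
  unfold cnt. induction l as [|a l IH]; simpl. lia.
  rewrite memb_cons. destruct (f a), (a =? p), (memb a K); simpl; lia.
Qed.

Lemma cnt_remove f p K l : NoDup l -> In p l -> f p = true -> memb p K = false ->
  cnt f K l = S (cnt f (p :: K) l).
Proof.
  unfold cnt. induction l as [|a l IH]; intros Hnd Hin Hf Hm. destruct Hin.
  inversion Hnd; subst. simpl. rewrite memb_cons.
  destruct Hin as [<-|Hin].
  - rewrite Hf, Hm, Nat.eqb_refl. simpl. f_equal.
    f_equal. apply filter_ext_in. intros q Hq. rewrite memb_cons.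
    destruct (Nat.eqb_spec q a); [subst; contradiction|]. reflexivity.
  - destruct (Nat.eqb_spec a p); [subst; contradiction|]. simpl.
    specialize (IH H2 Hin Hf Hm).
    destruct (f a && negb (memb a K)); simpl; rewrite IH; reflexivity.
Qed.

Definition ones_out n K B := cnt (fun p => nth p B false) K (seq 0 n).
Definition sfx_out n s K := cnt (fun _ => true) K (seq n s).

Lemma nodup_le1 {A} (l : list A) a : NoDup l -> (forall x, In x l -> x = a) -> length l <= 1.
Proof.
  intros Hnd H. destruct l as [|x [|y l]]; simpl; try lia.
  inversion Hnd; subst. exfalso. apply H2. left.
  rewrite (H x), (H y); simpl; auto.
Qed.

Lemma nodup_map_filter {A B} (f : A -> B) (P : A -> bool) l :
  NoDup (map f l) -> NoDup (map f (filter P l)).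
Proof.
  induction l as [|a l IH]; simpl; intros H. constructor.
  inversion H; subst. destruct (P a); simpl; auto. constructor; auto.
  intros Hin. apply H2. apply in_map_iff in Hin as [x [E Hx]].
  apply filter_In in Hx. apply in_map_iff. exists x. tauto.
Qed.

Lemma filter_nil_all {A} (g : A -> bool) l : (forall y, In y l -> g y = false) -> filter g l = [].
Proof. induction l as [|a l IH]; simpl; intros H; auto. rewrite H by auto. apply IH; auto. Qed.

Lemma tree_bound n s (T : dtree (list bool)) : forall d k s' K (L : list (list bool * list bool)),
  NoDup (map fst L) ->
  (forall x, In x L -> length (snd x) = n + s /\ dt_probes T (snd x) <= d /\
       dt_output T (snd x) = fst x /\ ones_out n K (snd x) <= k) ->
  sfx_out n s K <= s' ->
  (forall x y p, In x L -> In y L -> In p K -> nth p (snd x) false = nth p (snd y) false) ->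
  length L <= Bd d k s'.
Proof.
  induction T as [a | p T0 IH0 T1 IH1]; intros d k s' K L Hnd HL Hs Hag.
  - eapply Nat.le_trans; [|apply Bd_ge1].
    rewrite <- (length_map fst). apply (nodup_le1 _ a Hnd).
    intros x Hx. apply in_map_iff in Hx as [y [<- Hy]]. apply HL in Hy. simpl in Hy. symmetry; apply Hy.
  - destruct d as [|d].
    { destruct L as [|x L]. simpl; lia. exfalso. destruct (HL x (or_introl eq_refl)) as [_ [H _]].
      simpl in H. lia. }
    set (f := fun x : list bool * list bool => nth p (snd x) false).
    pose proof (filter_length f L) as Hlen.
    set (L1 := filter f L) in *. set (L0 := filter (fun x => negb (f x)) L) in *.
    assert (HL1 : forall x, In x L1 -> length (snd x) = n + s /\ dt_probes T1 (snd x) <= d /\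
       dt_output T1 (snd x) = fst x /\ ones_out n K (snd x) <= k /\ nth p (snd x) false = true).
    { intros x Hx. apply filter_In in Hx as [Hx Hf]. unfold f in Hf. apply HL in Hx.
      simpl in Hx. rewrite Hf in Hx. intuition lia. }
    assert (HL0 : forall x, In x L0 -> length (snd x) = n + s /\ dt_probes T0 (snd x) <= d /\
       dt_output T0 (snd x) = fst x /\ ones_out n K (snd x) <= k /\ nth p (snd x) false = false).
    { intros x Hx. apply filter_In in Hx as [Hx Hf]. unfold f in Hf.
      destruct (nth p (snd x) false) eqn:E; [discriminate|]. apply HL in Hx.
      simpl in Hx. rewrite E in Hx. intuition lia. }
    assert (Hnd0 : NoDup (map fst L0)) by (apply nodup_map_filter; auto).
    assert (Hnd1 : NoDup (map fst L1)) by (apply nodup_map_filter; auto).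
    assert (Hag0 : forall x y q, In x L0 -> In y L0 -> In q K -> nth q (snd x) false = nth q (snd y) false).
    { intros x y q Hx Hy; apply Hag; apply filter_In in Hx; apply filter_In in Hy; tauto. }
    assert (Hag1 : forall x y q, In x L1 -> In y L1 -> In q K -> nth q (snd x) false = nth q (snd y) false).
    { intros x y q Hx Hy; apply Hag; apply filter_In in Hx; apply filter_In in Hy; tauto. }
    assert (Hgen : forall k0 s0 K0, (forall x, In x L -> ones_out n K0 (snd x) <= k0) ->
              sfx_out n s K0 <= s0 ->
              (forall x y q, In x L -> In y L -> In q K0 -> nth q (snd x) false = nth q (snd y) false) ->
              length L0 <= Bd d k0 s0 /\ length L1 <= Bd d k0 s0).
    { intros k0 s0 K0 Ho Hs0 Hag'. split.
      - apply (IH0 d k0 s0 K0 L0 Hnd0); auto.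
        + intros x Hx. pose proof (HL0 x Hx). assert (In x L) by (apply filter_In in Hx; tauto).
          specialize (Ho x H0). tauto.
        + intros x y q Hx Hy; apply Hag'; apply filter_In in Hx; apply filter_In in Hy; tauto.
      - apply (IH1 d k0 s0 K0 L1 Hnd1); auto.
        + intros x Hx. pose proof (HL1 x Hx). assert (In x L) by (apply filter_In in Hx; tauto).
          specialize (Ho x H0). tauto.
        + intros x y q Hx Hy; apply Hag'; apply filter_In in Hx; apply filter_In in Hy; tauto. }
    assert (Hk : forall x, In x L -> ones_out n K (snd x) <= k) by (intros x Hx; apply HL in Hx; tauto).
    destruct (orb (memb p K) (n + s <=? p)) eqn:Hm.
    +
      assert (Hsame : forall x y, In x L -> In y L -> f x = f y).
      { intros x y Hx Hy. unfold f. apply Bool.orb_true_iff in Hm as [Hm|Hm].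
        - apply Hag; auto. apply memb_In; auto.
        - apply Nat.leb_le in Hm. apply HL in Hx. apply HL in Hy.
          rewrite !nth_overflow by lia. reflexivity. }
      destruct (Hgen k s' K Hk Hs Hag) as [H0 H1].
      pose proof (Bd_mono d k s').
      destruct L as [|x0 L']. simpl; lia.
      destruct (f x0) eqn:Ef.
      * assert (L0 = []).
        { apply filter_nil_all. intros y Hy. rewrite <- (Hsame x0 y) by (simpl; auto). rewrite Ef; reflexivity. }
        rewrite H2 in Hlen. simpl in Hlen. simpl; lia.
      * assert (L1 = []).
        { apply filter_nil_all. intros y Hy. rewrite <- (Hsame x0 y) by (simpl; auto). exact Ef. }
        rewrite H2 in Hlen. simpl in Hlen; simpl; lia.
    + apply Bool.orb_false_iff in Hm as [Hm Hp]. apply Nat.leb_gt in Hp.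
      assert (HagK : forall (b : bool) (Lb : list (list bool * list bool)),
          (forall x, In x Lb -> In x L /\ nth p (snd x) false = b) ->
          forall x y q, In x Lb -> In y Lb -> In q (p :: K) -> nth q (snd x) false = nth q (snd y) false).
      { intros b Lb HLb x y q Hx Hy [<-|Hq].
        - apply HLb in Hx. apply HLb in Hy. destruct Hx as [_ ->], Hy as [_ ->]. reflexivity.
        - apply HLb in Hx. apply HLb in Hy. apply Hag; tauto. }
      assert (HL0' : forall x, In x L0 -> In x L /\ nth p (snd x) false = false).
      { intros x Hx. split. apply filter_In in Hx; tauto. apply HL0; auto. }
      assert (HL1' : forall x, In x L1 -> In x L /\ nth p (snd x) false = true).
      { intros x Hx. split. apply filter_In in Hx; tauto. apply HL1; auto. }
      assert (Hsm : sfx_out n s (p :: K) <= s') by (pose proof (cnt_mono (fun _ => true) p K (seq n s)); unfold sfx_out in *; lia).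
      destruct (Nat.lt_ge_cases p n) as [Hpn|Hpn].
      *
        assert (IH0' : length L0 <= Bd d k s').
        { apply (IH0 d k s' (p :: K) L0 Hnd0); auto.
          - intros x Hx. pose proof (HL0 x Hx). pose proof (HL0' x Hx).
            pose proof (Hk x (proj1 H0)). pose proof (cnt_mono (fun q => nth q (snd x) false) p K (seq 0 n)).
            unfold ones_out in *. intuition lia.
          - apply (HagK false); auto. }
        destruct k as [|k].
        -- assert (L1 = []).
           { destruct L1 as [|x l]; auto. exfalso. destruct (HL1' x (or_introl eq_refl)) as [Hx Hpx].
             pose proof (Hk x Hx). unfold ones_out in H.
             rewrite (cnt_remove (fun q => nth q (snd x) false) p K (seq 0 n)) in H; auto.
             lia. apply seq_NoDup. apply in_seq; lia. }
           rewrite H in Hlen. simpl in Hlen. pose proof (Bd_mono d 0 s'). lia.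
        -- assert (IH1' : length L1 <= Bd d k s').
           { apply (IH1 d k s' (p :: K) L1 Hnd1); auto.
             - intros x Hx. pose proof (HL1 x Hx). pose proof (HL1' x Hx).
               pose proof (Hk x (proj1 H0)). unfold ones_out in *.
               rewrite (cnt_remove (fun q => nth q (snd x) false) p K (seq 0 n)) in H1; auto.
               intuition lia. apply seq_NoDup. apply in_seq; lia. tauto.
             - apply (HagK true); auto. }
           pose proof (Bd_pref d k s'). lia.
      *
        assert (Hsr : sfx_out n s K = S (sfx_out n s (p :: K))).
        { unfold sfx_out. apply cnt_remove; auto. apply seq_NoDup. apply in_seq; lia. }
        destruct s' as [|s'']. lia.
        assert (Hs'' : sfx_out n s (p :: K) <= s'') by lia.
        assert (Hk' : forall x, In x L -> ones_out n (p :: K) (snd x) <= k).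
        { intros x Hx. pose proof (Hk x Hx). pose proof (cnt_mono (fun q => nth q (snd x) false) p K (seq 0 n)).
          unfold ones_out in *. lia. }
        assert (IH0' : length L0 <= Bd d k s'').
        { apply (IH0 d k s'' (p :: K) L0 Hnd0); auto.
          - intros x Hx. pose proof (HL0 x Hx). pose proof (HL0' x Hx).
            pose proof (Hk' x (proj1 H0)). intuition lia.
          - apply (HagK false); auto. }
        assert (IH1' : length L1 <= Bd d k s'').
        { apply (IH1 d k s'' (p :: K) L1 Hnd1); auto.
          - intros x Hx. pose proof (HL1 x Hx). pose proof (HL1' x Hx).
            pose proof (Hk' x (proj1 H0)). intuition lia.
          - apply (HagK true); auto. }
        pose proof (Bd_suf d k s''). lia.
Qed.

Lemma card_seq_gen S0 m : length (filter (fun p => nth (p - m) S0 false) (seq m (length S0))) = card_bits S0.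
Proof.
  revert m; induction S0 as [|b S0 IH]; intros m; simpl. reflexivity.
  rewrite Nat.sub_diag. simpl.
  rewrite (filter_ext_in _ (fun p => nth (p - Datatypes.S m) S0 false)).
  - unfold card_bits in *. simpl. specialize (IH (Datatypes.S m)). destruct b; simpl; rewrite IH; reflexivity.
  - intros a Ha. apply in_seq in Ha. replace (a - m) with (Datatypes.S (a - Datatypes.S m)) by lia. reflexivity.
Qed.

Lemma card_seq S0 : length (filter (fun p => nth p S0 false) (seq 0 (length S0))) = card_bits S0.
Proof.
  rewrite <- (card_seq_gen S0 0). f_equal. apply filter_ext. intros a. rewrite Nat.sub_0_r. reflexivity.
Qed.

Lemma pairs_exist n (R : list bool -> list bool -> Prop)
  (HRtot : forall S, length S = n -> exists B, R S B) :
  forall l, (forall S, In S l -> length S = n) ->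
  exists L : list (list bool * list bool), map fst L = l /\ forall x, In x L -> R (fst x) (snd x).
Proof.
  induction l as [|S l IH]; intros H.
  - exists []. split; auto. intros x [].
  - destruct IH as [L [H1 H2]]. intros; apply H; simpl; auto.
    destruct (HRtot S (H S (or_introl eq_refl))) as [B HB].
    exists ((S, B) :: L). split. simpl; congruence.
    intros x [<-|Hx]; auto.
Qed.

Lemma count_main (n s t : nat)
  (R : list bool -> list bool -> Prop)
  (HRtyp : forall S B, R S B -> length S = n /\ length B = (n + s)%nat)
  (HRtot : forall S, length S = n -> exists B, R S B)
  (HRsys : forall S B, R S B ->
     forall l, (l < n)%nat -> nth l B false = nth l S false)
  (Halg : forall r, (1 <= r <= n)%nat ->
     exists T : dtree (list bool),
       forall S B, R S B -> card_bits S = r ->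
         (dt_probes T B <= r * t)%nat /\ dt_output T B = S) :
  forall r, 1 <= r <= n -> binom n r <= Bd (r * t) r s.
Proof.
  intros r Hr. destruct (Halg r Hr) as [T HT].
  destruct (pairs_exist n R HRtot (subs n r)) as [L [HL1 HL2]].
  { intros S HS. apply subs_prop in HS. tauto. }
  rewrite <- subs_len, <- HL1, length_map.
  apply (tree_bound n s T (r * t) r s [] L).
  - rewrite HL1. apply subs_nodup.
  - intros x Hx. pose proof (HL2 x Hx) as HR.
    assert (Hin : In (fst x) (subs n r)) by (rewrite <- HL1; apply in_map; auto).
    apply subs_prop in Hin as [Hlen Hc].
    destruct (HT _ _ HR Hc) as [Hp Ho].
    split. apply (HRtyp _ _ HR). split; auto. split; auto.
    unfold ones_out, cnt.
    rewrite (filter_ext_in _ (fun p => nth p (fst x) false)).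
    + rewrite <- Hlen, card_seq. lia.
    + intros a Ha. apply in_seq in Ha. rewrite (HRsys _ _ HR a) by lia.
      unfold memb. simpl. rewrite Bool.andb_true_r. reflexivity.
  - unfold sfx_out, cnt. eapply Nat.le_trans. apply filter_length_le. rewrite length_seq. lia.
  - intros x y p _ _ [].
Qed.

Lemma binom_1 n : binom n 1 = n.
Proof. induction n. reflexivity. rewrite binom_SS, binom_0, IHn. lia. Qed.

Lemma Bd_G r t s : 1 <= t -> r <= s -> Bd (r * t) r s <= 2 ^ s * binom (r * t) r.
Proof.
  intros Ht Hrs. unfold Bd. destruct (r * t <=? s) eqn:E.
  - apply Nat.leb_le in E. pose proof (binom_pos (r * t) r ltac:(nia)).
    pose proof (Nat.pow_le_mono_r 2 (r * t) s ltac:(lia) E). nia.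
  - apply Nat.leb_gt in E. apply Nat.mul_le_mono_l. apply binom_mono. lia.
Qed.

Lemma key_nat n r m s : 1 <= r -> r <= m -> m <= n -> binom n r <= 2 ^ s * binom m r ->
  n ^ r <= 2 ^ s * m ^ r.
Proof.
  intros H1 H2 H3 H4. pose proof (binom_ratio m n r H3).
  pose proof (binom_pos m r H2).
  assert (n ^ r * binom m r <= (2 ^ s * m ^ r) * binom m r).
  { eapply Nat.le_trans. apply H. 
    replace (2 ^ s * m ^ r * binom m r) with (m ^ r * (2 ^ s * binom m r)) by ring.
    apply Nat.mul_le_mono_l. auto. }
  apply (Nat.mul_le_mono_pos_r _ _ (binom m r)); lia.
Qed.

Open Scope R_scope.

Lemma exp_pow a k : exp a ^ k = exp (INR k * a).
Proof.
  induction k. simpl. rewrite Rmult_0_l, exp_0. reflexivity.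
  simpl pow. rewrite IHk, <- exp_plus, S_INR. f_equal. ring.
Qed.

Lemma exp_le' a b : a <= b -> exp a <= exp b.
Proof. intros [H|H]. left; apply exp_increasing; auto. subst; lra. Qed.

Lemma pow_lt' a b k : 0 <= a -> a < b -> (1 <= k)%nat -> a ^ k < b ^ k.
Proof.
  intros Ha Hab Hk. induction k. lia.
  destruct k. simpl. lra.
  assert (a ^ S k < b ^ S k) by (apply IHk; lia).
  assert (0 <= a ^ S k) by (apply pow_le; auto).
  simpl pow in *. nra.
Qed.

Lemma ln2_bounds : 0 < ln 2 < 1.
Proof.
  pose proof (exp_ineq1 1 ltac:(lra)).
  split. rewrite <- ln_1. apply ln_increasing; lra.
  rewrite <- (ln_exp 1). apply ln_increasing; lra.
Qed.

Lemma exists_ceil x : 0 < x -> exists r : nat, x <= INR r <= x + 1 /\ (1 <= r)%nat.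
Proof.
  intros Hx. destruct (archimed x) as [H1 H2].
  assert (0 < up x)%Z by (apply lt_IZR; lra).
  exists (Z.to_nat (up x)). rewrite INR_IZR_INZ, Z2Nat.id by lia.
  split. lra. lia.
Qed.

Theorem mainTheorem8 (n s t : nat) (Hn : (2 <= n)%nat)
  (R : list bool -> list bool -> Prop)
  (HRtyp : forall S B, R S B -> length S = n /\ length B = (n + s)%nat)
  (HRtot : forall S, length S = n -> exists B, R S B)
  (HRsys : forall S B, R S B ->
     forall l, (l < n)%nat -> nth l B false = nth l S false)
  (Halg : forall r, (1 <= r <= n)%nat ->
     exists T : dtree (list bool),
       forall S B, R S B -> card_bits S = r ->
         (dt_probes T B <= r * t)%nat /\ dt_output T B = S) :
  (INR s + 1 / ln 2) * INR t >= INR n / (exp 1 * ln 2) /\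
  ((0 < s)%nat -> INR s * INR t >= INR n / 2).
Proof.
  pose proof (count_main n s t R HRtyp HRtot HRsys Halg) as Hc.
  pose proof ln2_bounds as Hl2.
  pose proof (exp_ineq1 1 ltac:(lra)) as He.
  assert (Ht : (1 <= t)%nat).
  { destruct t. 2: lia. exfalso. specialize (Hc 1%nat ltac:(lia)).
    rewrite binom_1 in Hc. unfold Bd in Hc. simpl in Hc. lia. }
  assert (C2 : (0 < s)%nat -> (n <= 2 * s * t)%nat).
  { intros Hs. destruct (le_lt_dec s n) as [Hsn|Hsn]. 2: nia.
    destruct (le_lt_dec n (2 * s * t)) as [|Hlt]; auto. exfalso.
    pose proof (Hc s ltac:(lia)). pose proof (Bd_G s t s Ht ltac:(lia)).
    pose proof (key_nat n s (s * t) s ltac:(lia) ltac:(nia) ltac:(nia) ltac:(lia)).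
    rewrite <- Nat.pow_mul_l in H1.
    pose proof (Nat.pow_lt_mono_l (2 * (s * t)) n s ltac:(lia) ltac:(lia)). lia. }
  split.
  - assert (Hgoal : INR n <= exp 1 * INR t * (INR s * ln 2 + 1)).
    { destruct s as [|s'].
      + specialize (Hc 1%nat ltac:(lia)). rewrite binom_1 in Hc. unfold Bd in Hc.
        destruct (1 * t <=? 0)%nat eqn:E. apply Nat.leb_le in E; lia.
        rewrite binom_1 in Hc. simpl Nat.pow in Hc. assert (Hc2 : (n <= t + 1)%nat) by lia.
        apply le_INR in Hc2. apply le_INR in Ht. apply le_INR in Hn. rewrite plus_INR in Hc2. simpl in *. nra.
      + set (s := S s') in *.
        assert (Hspos : 1 <= INR s) by (apply le_INR in Hs0 || (change 1 with (INR 1); apply le_INR; unfold s; lia)).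
        destruct (Rle_or_lt (INR n) (exp 1 * INR t * (INR s * ln 2 + 1))) as [|Hlt]; auto.
        exfalso.
        destruct (exists_ceil (INR s * ln 2) ltac:(nra)) as [r [[Hr1 Hr2] Hr]].
        assert (Htr : 1 <= INR t) by (change 1 with (INR 1); apply le_INR; auto).
        assert (Hrs : (r <= s)%nat).
        { assert (r < Datatypes.S s)%nat by (apply INR_lt; rewrite S_INR; nra). lia. }
        assert (Hmn : exp 1 * INR (r * t) < INR n).
        { rewrite mult_INR. assert (0 <= exp 1 * INR t) by nra. assert (0 <= (exp 1 * INR t) * (INR s * ln 2 + 1 - INR r)) by (apply Rmult_le_pos; lra). nra. }
        assert (Hrt : (r * t < n)%nat) by (apply INR_lt; pose proof (pos_INR (r * t)); nra).
        pose proof (Hc r ltac:(nia)). pose proof (Bd_G r t s Ht Hrs).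
        pose proof (key_nat n r (r * t) s Hr ltac:(nia) ltac:(lia) ltac:(lia)) as Hk.
        apply le_INR in Hk. rewrite mult_INR, !pow_INR in Hk.
        set (m := INR (r * t)) in *.
        assert (Hm0 : 0 < m) by (unfold m; apply lt_0_INR; nia).
        assert (H2s : INR 2 ^ s <= exp 1 ^ r).
        { replace (INR 2) with (exp (ln 2)) by (rewrite exp_ln; simpl; lra).
          rewrite !exp_pow. apply exp_le'. lra. }
        pose proof (pow_lt' (exp 1 * m) (INR n) r ltac:(nra) Hmn Hr) as Hp.
        rewrite Rpow_mult_distr in Hp.
        assert (0 < m ^ r) by (apply pow_lt; auto).
        nra. }
    apply Rle_ge.
    replace ((INR s + 1 / ln 2) * INR t) with (exp 1 * INR t * (INR s * ln 2 + 1) / (exp 1 * ln 2)) by (field; lra).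
    unfold Rdiv. apply Rmult_le_compat_r; auto.
    left. apply Rinv_0_lt_compat. nra.
  - intros Hs. specialize (C2 Hs). apply le_INR in C2. rewrite !mult_INR in C2. simpl in C2. lra.
Qed.
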